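(* Let $W$ be an affine Weyl group, $w\in W$, $i\in D_R(w)$, and let $r_1,\dots,r_n$ be reflections with $H_{r_t}=H_{\alpha,c+t}$ for some root $\alpha$ and $c\in\mathbb{Z}$, such that for all $1\le t\le n$, $$\ell(r_t\cdots r_1ws_i)=\ell(r_{t-1}\cdots r_1ws_i)+1\quad\text{and}\quad r_t\cdots r_1ws_i\neq r_{t-1}\cdots r_1w.$$ Then $i\notin D_R(r_n\cdots r_1ws_i)$.
   Context: $W$ is the affine Weyl group of a crystallographic root system $\Phi$, a Coxeter group with simple generators $s_i$; $H_{\beta,k}=\{v:\langle v,\beta\rangle=k\}$ and reflections of $W$ are the reflections in these hyperplanes; $H_r$ denotes the hyperplane of the reflection $r$. $\ell$ is length and $D_R(w)=\{i:\ell(ws_i)<\ell(w)\}$ is the right descent set. *)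

(* Defs.v *)
From HB Require Import structures.
From mathcomp Require Import all_boot all_order all_algebra.
From mathcomp Require Import finmap.
From mathcomp Require Import boolp classical_sets cardinality reals.
Set Implicit Arguments. Unset Strict Implicit. Unset Printing Implicit Defensive.
Import Order.TTheory GRing.Theory Num.Theory.
Local Open Scope ring_scope.

Section AffineWeyl.
Variables (R : realType) (n : nat).

Definition vec := 'rV[R]_n.
Definition dot (u v : vec) : R := (u *m v^T) 0 0.

Definition refl (beta : vec) (k : int) (v : vec) : vec :=
  v - ((dot v beta - k%:~R) * 2 / dot beta beta) *: beta.

Definition hyperplane (beta : vec) (k : int) : set vec :=
  [set v | dot v beta = k%:~R].

Definition crystallographic_root_system (Phi : seq vec) : Prop :=
  [/\ (0 : vec) \notin Phi,
      (forall v : vec, (forall b, b \in Phi -> dot v b = 0) -> v = 0),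
      (forall a (c : R), a \in Phi -> c *: a \in Phi -> c = 1 \/ c = -1),
      (forall a b, a \in Phi -> b \in Phi -> refl a 0 b \in Phi) &
      (forall a b, a \in Phi -> b \in Phi ->
         exists z : int, 2 * dot b a / dot a a = z%:~R)].

Inductive inW (Phi : seq vec) : (vec -> vec) -> Prop :=
  | inW_id : inW Phi id
  | inW_refl f b k : inW Phi f -> b \in Phi -> inW Phi (refl b k \o f).

(* A regular vector rho determines the positive system
   Phi^+ = {b in Phi | <b,rho> > 0} *)
Definition regular (Phi : seq vec) (rho : vec) : Prop :=
  forall b, b \in Phi -> dot b rho != 0.

Definition positive (Phi : seq vec) (rho b : vec) : Prop :=
  b \in Phi /\ 0 < dot b rho.

Definition fund_alcove (Phi : seq vec) (rho : vec) : set vec :=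
  [set v | forall b, positive Phi rho b -> 0 < dot v b < 1].

Definition separates (Phi : seq vec) (rho : vec) (w : vec -> vec)
  (b : vec) (k : int) : Prop :=
  forall x y, fund_alcove Phi rho x -> fund_alcove Phi rho y ->
    (dot x b - k%:~R) * (dot (w y) b - k%:~R) < 0.

Definition len (Phi : seq vec) (rho : vec) (w : vec -> vec) : nat :=
  #|` fset_set [set p : vec * int |
         positive Phi rho p.1 /\ separates Phi rho w p.1 p.2] |%fset.

(* walls of the fundamental alcove: facets of the polyhedron A_0 *)
Definition wall (Phi : seq vec) (rho : vec) (b : vec) (k : int) : Prop :=
  [/\ positive Phi rho b, (k = 0 \/ k = 1) &
      exists x, dot x b = k%:~R /\
        forall g, positive Phi rho g -> g != b -> 0 < dot x g < 1].

Definition simple_refl (Phi : seq vec) (rho : vec) (s : vec -> vec) : Prop :=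
  exists b k, wall Phi rho b k /\ s = refl b k.

Definition right_descent (Phi : seq vec) (rho : vec) (w s : vec -> vec) : Prop :=
  (len Phi rho (w \o s) < len Phi rho w)%N.

Fixpoint rprod (r : nat -> vec -> vec) (t : nat) : vec -> vec :=
  match t with
  | 0 => id
  | t'.+1 => r t'.+1 \o rprod r t'
  end.

End AffineWeyl.

(* Main.v *)
Require Import Defs.
From HB Require Import structures.
From mathcomp Require Import all_boot all_order all_algebra.
From mathcomp Require Import finmap.
From mathcomp Require Import boolp classical_sets cardinality reals.
From mathcomp Require Import ring lra zify.
Set Implicit Arguments. Unset Strict Implicit. Unset Printing Implicit Defensive.
Import Order.TTheory GRing.Theory Num.Theory.
Local Open Scope ring_scope.

Section Aux.
Variables (R : realType) (n : nat).
Local Notation V := (vec R n).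

Lemma dotE (u v : V) : dot u v = \sum_i u 0 i * v 0 i.
Proof. by rewrite /dot !mxE; apply: eq_bigr => i _; rewrite mxE. Qed.

Lemma dotC (u v : V) : dot u v = dot v u.
Proof. by rewrite !dotE; apply: eq_bigr => i _; rewrite mulrC. Qed.

Lemma dotDl (u v x : V) : dot (u + v) x = dot u x + dot v x.
Proof. by rewrite !dotE -big_split; apply: eq_bigr => i _; rewrite mxE mulrDl. Qed.

Lemma dotZl (a : R) (u x : V) : dot (a *: u) x = a * dot u x.
Proof. by rewrite !dotE mulr_sumr; apply: eq_bigr => i _; rewrite mxE mulrA. Qed.

Lemma dotNl (u x : V) : dot (- u) x = - dot u x.
Proof. by rewrite -scaleN1r dotZl mulN1r. Qed.

Lemma dotBl (u v x : V) : dot (u - v) x = dot u x - dot v x.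
Proof. by rewrite dotDl dotNl. Qed.

Lemma dot0l (x : V) : dot 0 x = 0.
Proof. by rewrite -(scale0r (0 : V)) dotZl mul0r. Qed.

Lemma dotDr (u v x : V) : dot x (u + v) = dot x u + dot x v.
Proof. by rewrite dotC dotDl !(dotC x). Qed.
Lemma dotZr (a : R) (u x : V) : dot x (a *: u) = a * dot x u.
Proof. by rewrite dotC dotZl (dotC x). Qed.
Lemma dotNr (u x : V) : dot x (- u) = - dot x u.
Proof. by rewrite dotC dotNl (dotC x). Qed.
Lemma dotBr (u v x : V) : dot x (u - v) = dot x u - dot x v.
Proof. by rewrite dotDr dotNr. Qed.

Lemma dot_ge0 (v : V) : 0 <= dot v v.
Proof. by rewrite dotE; apply: sumr_ge0 => i _; rewrite -expr2 sqr_ge0. Qed.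

Lemma dot_eq0 (v : V) : dot v v = 0 -> v = 0.
Proof.
rewrite dotE => /eqP; rewrite psumr_eq0 => [/allP H|i _]; last by rewrite -expr2 sqr_ge0.
apply/matrixP => i j; rewrite (ord1 i) mxE.
have := H j (mem_index_enum _); rewrite /= -expr2 sqrf_eq0 => /eqP //.
Qed.

Lemma dot_ext (x y : V) : (forall v, dot v x = dot v y) -> x = y.
Proof.
move=> H; apply/eqP; rewrite -subr_eq0; apply/eqP/dot_eq0.
by rewrite dotBr H subrr.
Qed.

Lemma dot_refl (b : V) (k : int) (v g : V) :
  dot (refl b k v) g = dot v g - (dot v b - k%:~R) * 2 / dot b b * dot b g.
Proof. by rewrite /refl dotBl dotZl. Qed.

Lemma reflK (b : V) (k : int) : dot b b != 0 -> forall v, refl b k (refl b k v) = v.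
Proof.
move=> hb v; rewrite {1}/refl dot_refl /refl.
set c := (dot v b - k%:~R) * 2 / dot b b.
have -> : (dot v b - c * dot b b - k%:~R) * 2 / dot b b = - c.
  rewrite /c; field; exact: hb.
by rewrite scaleNr opprK subrK.
Qed.

End Aux.


Section Root.
Variables (R : realType) (n : nat) (Phi : seq (vec R n)) (rho : vec R n).
Local Notation V := (vec R n).
Hypothesis CRS : crystallographic_root_system Phi.
Hypothesis REG : regular Phi rho.

Lemma Phi_nz b : b \in Phi -> dot b b != 0.
Proof.
case: CRS => H0 _ _ _ _ hb; apply/eqP => /dot_eq0 b0.
by move: H0; rewrite -b0 hb.
Qed.

Lemma Phi_opp b : b \in Phi -> - b \in Phi.
Proof.
move=> hb; case: CRS => _ _ _ H _.
suff <- : refl b 0 b = - b by apply: H.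
rewrite /refl subr0 mulrAC divff ?Phi_nz // mul1r.
by rewrite scaler_nat mulr2n opprD addrA subrr add0r.
Qed.

Lemma Phi_int a b : a \in Phi -> b \in Phi ->
  exists z : int, 2 * dot b a / dot a a = z%:~R.
Proof. by case: CRS => _ _ _ _ H; apply: H. Qed.

Lemma refl_root a b : a \in Phi -> b \in Phi -> refl a 0 b \in Phi.
Proof. by case: CRS => _ _ _ H _; apply: H. Qed.

Lemma dot_refl_hyp (a : V) (k : int) (b : V) (z : int) (v : V) (m : int) :
  2 * dot b a / dot a a = z%:~R ->
  dot (refl a k v) b - m%:~R = dot v (refl a 0 b) - (m - z * k)%:~R.
Proof.
move=> hz; rewrite dot_refl /refl dotBr dotZr (dotC a b) intrB intrM -hz.
rewrite subr0; ring.
Qed.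

Lemma W_hyp f : inW Phi f -> forall beta (m : int), beta \in Phi ->
  exists beta' (m' : int), beta' \in Phi /\
    forall v, dot (f v) beta - m%:~R = dot v beta' - m'%:~R.
Proof.
elim=> [|g b k Hg IH hb] beta m hbeta.
  by exists beta, m; split.
have [z hz] := Phi_int hb hbeta.
have [beta' [m' [hb' E]]] := IH (refl b 0 beta) (m - z * k) (refl_root hb hbeta).
exists beta', m'; split => // v /=.
by rewrite (dot_refl_hyp _ _ _ hz) E.
Qed.

Lemma unit_sign (x y : R) (m : int) : 0 < x < 1 -> 0 < y < 1 ->
  0 < (x - m%:~R) * (y - m%:~R).
Proof.
move=> /andP[x0 x1] /andP[y0 y1].
have [m0|m0] := lerP m 0.
  have : m%:~R <= 0 :> R by rewrite lerz0.
  move=> hm; nra.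
have : 1 <= m%:~R :> R by rewrite ler1z.
move=> hm; nra.
Qed.

Lemma pos_or_neg b : b \in Phi -> positive Phi rho b \/ positive Phi rho (- b).
Proof.
move=> hb; have := REG hb; rewrite neq_lt => /orP[h|h].
  by right; split; [exact: Phi_opp | rewrite dotNl oppr_gt0].
by left.
Qed.

Lemma A0_sign x y beta (m : int) : fund_alcove Phi rho x -> fund_alcove Phi rho y ->
  beta \in Phi -> 0 < (dot x beta - m%:~R) * (dot y beta - m%:~R).
Proof.
move=> hx hy hb; case: (pos_or_neg hb) => hp.
  exact: unit_sign (hx _ hp) (hy _ hp).
have := unit_sign (-m) (hx _ hp) (hy _ hp).
by rewrite !dotNr intrN -!opprD mulrNN.
Qed.

Lemma W_sign f x y beta (m : int) : inW Phi f -> fund_alcove Phi rho x ->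
  fund_alcove Phi rho y -> beta \in Phi ->
  0 < (dot (f x) beta - m%:~R) * (dot (f y) beta - m%:~R).
Proof.
move=> hf hx hy hb; have [b' [m' [hb' E]]] := W_hyp hf m hb.
by rewrite !E; apply: A0_sign.
Qed.

Lemma inW_comp f g : inW Phi f -> inW Phi g -> inW Phi (f \o g).
Proof.
move=> hf hg; elim: hf => [|f' b k _ IH hb]; first exact: hg.
exact: inW_refl IH hb.
Qed.

End Root.


Section Iso.
Variables (R : realType) (n : nat) (Phi : seq (vec R n)).
Local Notation V := (vec R n).
Hypothesis CRS : crystallographic_root_system Phi.

Lemma mul_trmx_dot (u b : V) : u *m b^T = (dot u b)%:M.
Proof. by rewrite [LHS]mx11_scalar. Qed.

Definition Pm (b : V) : 'M[R]_n := 1%:M - (2 / dot b b) *: (b^T *m b).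

Lemma reflM (b : V) (k : int) : dot b b != 0 ->
  forall u, refl b k u = u *m Pm b + (k%:~R * 2 / dot b b) *: b.
Proof.
move=> hb u; rewrite /refl /Pm mulmxBr mulmx1 -scalemxAr mulmxA mul_trmx_dot.
rewrite mul_scalar_mx scalerA -addrA; congr (_ + _).
rewrite -!scaleNr -scalerDl; congr (_ *: _); field; exact: hb.
Qed.

Lemma Pm_orth (b : V) : dot b b != 0 -> Pm b *m (Pm b)^T = 1%:M.
Proof.
move=> hb.
have PT : (Pm b)^T = Pm b.
  by rewrite /Pm linearB /= linearZ /= trmx_mul trmxK trmx1.
rewrite PT /Pm mulmxBr mulmx1 mulmxBl mul1mx -!scalemxAr -!scalemxAl scalerA.
have -> : b^T *m b *m (b^T *m b) = dot b b *: (b^T *m b).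
  by rewrite mulmxA -(mulmxA _ b) mul_trmx_dot mul_mx_scalar -scalemxAl.
rewrite scalerA.
have -> : 2 / dot b b * (2 / dot b b) * dot b b = 2 / dot b b + 2 / dot b b.
  by field.
rewrite scalerDl; set X := _ *: (b^T *m b).
by rewrite opprB addrK subrK.
Qed.

Lemma W_iso f : inW Phi f -> exists L : 'M[R]_n, (L *m L^T = 1%:M) /\ (forall v, f v = f 0 + v *m L).
Proof.
elim=> [|g b k _ [L [HL Hg]] hb].
  by exists 1%:M; split; [rewrite trmx1 mulmx1 | move=> v; rewrite mulmx1 add0r].
have nb := Phi_nz CRS hb.
exists (L *m Pm b); split.
  by rewrite trmx_mul mulmxA -(mulmxA L) Pm_orth // mulmx1.
move=> v /=; rewrite !reflM // Hg (Hg 0) mul0mx addr0 mulmxDl mulmxA.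
by rewrite -!addrA; congr (_ + _); rewrite addrC.
Qed.

Lemma dot_orth (L : 'M[R]_n) (u v : V) : L *m L^T = 1%:M ->
  dot (u *m L) (v *m L) = dot u v.
Proof. by move=> HL; rewrite /dot trmx_mul mulmxA -(mulmxA u) HL mulmx1. Qed.

Lemma dot_mulmx (L : 'M[R]_n) (u a : V) : dot (u *m L) a = dot u (a *m L^T).
Proof. by rewrite /dot trmx_mul trmxK mulmxA. Qed.

Lemma conj_refl D a b0 (k k0 : int) (e : R) : inW Phi D -> a \in Phi -> b0 \in Phi ->
  e * e = 1 ->
  (forall v, dot (D v) a - k%:~R = e * (dot v b0 - k0%:~R)) ->
  forall v, refl a k (D v) = D (refl b0 k0 v).
Proof.
move=> hD ha hb0 ee H.
have [L [HL HD]] := W_iso hD.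
have HLT : L^T *m L = 1%:M by apply: mulmx1C.
have H1 : forall v, dot (v *m L) a = e * dot v b0.
  move=> v; have E0 := H 0; have Ev := H v.
  rewrite (HD v) dotDl in Ev; rewrite dot0l in E0.
  nra.
have H2 : a *m L^T = e *: b0.
  by apply: dot_ext => v; rewrite -dot_mulmx H1 dotZr.
have H3 : b0 *m L = e *: a.
  have : a = e *: (b0 *m L) by rewrite scalemxAl -H2 -mulmxA HLT mulmx1.
  by move=> {1}->; rewrite scalerA ee scale1r.
have H4 : dot a a = dot b0 b0.
  rewrite -(dot_orth b0 b0 HL) H3 dotZl dotZr mulrA ee mul1r //.
move=> v; rewrite [D (refl _ _ _)]HD /refl mulmxBl -scalemxAl H3 scalerA addrA -HD.
by rewrite H H4; congr (_ - _ *: _); ring.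
Qed.

End Iso.


Lemma card_inj_lt (T : choiceType) (A B : set T) (phi : T -> T) M :
  finite_set A -> finite_set B -> (forall p, A p -> B (phi p)) ->
  (forall p q, A p -> A q -> phi p = phi q -> p = q) -> B M ->
  (forall p, A p -> phi p <> M) -> (#|` fset_set A| < #|` fset_set B|)%N.
Proof.
move=> fA fB hAB hinj hM hnM.
set X := [fset phi x | x in fset_set A]%fset.
have cX : #|` X| = #|` fset_set A|.
  apply/eqP/card_in_imfsetP => p q; rewrite !in_fset_set // !inE.
  exact: hinj.
have MX : M \notin X.
  apply/negP => /imfsetP [p /= + Ep]; rewrite in_fset_set // inE => Ap.
  exact: hnM Ap (esym Ep).
have sub : (M |` X `<=` fset_set B)%fset.
  apply/fsubsetP => q; rewrite !inE => /orP [/eqP ->|/imfsetP [p /= + ->]].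
    by rewrite in_fset_set // inE.
  by rewrite !in_fset_set // !inE => /hAB.
have := fsubset_leq_card sub; rewrite cardfsU1 MX cX add1n; exact.
Qed.

Section Ub.
Variable R : realType.
Lemma seq_ub (T : eqType) (l : seq T) (G : T -> R) :
  exists B, forall g, g \in l -> G g <= B.
Proof.
elim: l => [|a l [B HB]]; first by exists 0.
exists (Num.max (G a) B) => g; rewrite inE => /orP [/eqP ->|/HB h].
  by rewrite le_max lexx.
by rewrite le_max h orbT.
Qed.

Lemma seq_lb (T : eqType) (l : seq T) (P : T -> Prop) (G : T -> R) :
  (forall g, g \in l -> P g -> 0 < G g) ->
  exists2 e, 0 < e & forall g, g \in l -> P g -> e <= G g.
Proof.
elim: l => [|a l IH] H; first by exists 1.
have [e e0 He] : exists2 e, 0 < e & forall g, g \in l -> P g -> e <= G g.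
  by apply: IH => g gl; apply: H; rewrite inE gl orbT.
case: (pselect (P a)) => Pa.
  have Ga := H a (mem_head _ _) Pa.
  exists (Num.min (G a) e); first by rewrite lt_min Ga e0.
  move=> g; rewrite inE => /orP [/eqP ->|gl Pg]; first by rewrite ge_min lexx.
  by rewrite ge_min He ?orbT.
exists e => // g; rewrite inE => /orP [/eqP -> //|gl Pg]; exact: He.
Qed.

Lemma finite_int_ball (Bn : nat) : finite_set [set k : int | `|k| <= Bn%:Z].
Proof.
apply: (@sub_finite_set _ _ ((fun i : nat => i%:Z - Bn%:Z) @` `I_(Bn + Bn).+1)).
  move=> k /= hk; exists (absz (k + Bn%:Z)) => /=; first by lia.
  by lia.
exact/finite_image/finite_II.
Qed.
End Ub.


Section Main.
Variables (R : realType) (n : nat) (Phi : seq (vec R n)) (rho : vec R n).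
Local Notation V := (vec R n).
Hypothesis CRS : crystallographic_root_system Phi.
Hypothesis REG : regular Phi rho.
Variable x0 : V.
Hypothesis X0 : fund_alcove Phi rho x0.

Definition T (z : V) : set (V * int) :=
  [set p | positive Phi rho p.1 /\
     (dot x0 p.1 - p.2%:~R) * (dot z p.1 - p.2%:~R) < 0].

Lemma lenE f : inW Phi f -> len Phi rho f = #|` fset_set (T (f x0))|.
Proof.
move=> hf; rewrite /len; congr (#|` fset_set _|).
apply/funext => p; apply/propext; split.
  by move=> [hp hs]; split => //; apply: hs.
move=> [hp hs]; split => // x y hx hy.
have hb : p.1 \in Phi by case: hp.
have h1 := A0_sign CRS REG p.2 hx X0 hb.
have h2 := W_sign CRS REG p.2 hf hy X0 hb.
nra.
Qed.

Lemma finiteT z : finite_set (T z).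
Proof.
have [B HB] := seq_ub Phi (fun g => `|dot x0 g| + `|dot z g|).
have B0 : 0 <= Num.max B 0 by rewrite le_max lexx orbT.
set Bn := Num.bound (Num.max B 0).
have HBn := archi_boundP B0.
apply: (@sub_finite_set _ _ ([set` Phi] `*` [set k : int | `|k| <= Bn%:Z])).
  move=> [b k] [[hb _] hs]; split => //=.
  have := HB b hb; rewrite /= => hB.
  have kb : `|k%:~R : R| <= `|dot x0 b| + `|dot z b|.
    have := ler_norm (dot x0 b); have := ler_norm (dot z b).
    have := ler_norm (- dot x0 b); have := ler_norm (- dot z b).
    rewrite !normrN ler_norml; move=> *; apply/andP; split; nra.
  have hm : B <= Num.max B 0 by rewrite le_max lexx.
  have hk : (`|k|%:~R : R) < (Bn%:Z)%:~R.
    rewrite intr_norm; apply: (le_lt_trans kb); apply: (le_lt_trans hB).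
    exact: (le_lt_trans hm HBn).
  by move: hk; rewrite ltr_int => /ltW.
apply: finite_setX; [exact: finite_seq | exact: finite_int_ball].
Qed.

Definition F (p : V * int) (v : V) : R := dot v p.1 - p.2%:~R.

Lemma TE z p : T z p <-> positive Phi rho p.1 /\ F p x0 * F p z < 0.
Proof. by []. Qed.

Lemma hyp_inj p q (e : R) : positive Phi rho p.1 -> positive Phi rho q.1 ->
  e * e = 1 -> (forall v, F p v = e * F q v) -> p = q.
Proof.
case: p => b1 m1; case: q => b2 m2 /= [_ h1] [_ h2] ee H.
have H0 := H 0; rewrite /F /= !dot0l in H0.
have Hb : b1 = e *: b2.
  apply: dot_ext => v; have := H v; rewrite /F /= dotZr; nra.
have [e1|e1] : e = 1 \/ e = -1.
  have : (e - 1) * (e + 1) = 0 by rewrite mulrDr !mulrBl; lra.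
  by move/eqP; rewrite mulf_eq0 => /orP [/eqP h|/eqP h]; [left|right]; lra.
  rewrite e1 mul1r in H0; rewrite Hb e1 scale1r; congr (_, _).
  by apply/eqP; rewrite -(eqr_int R); apply/eqP; lra.
move: h1; rewrite Hb e1 scaleN1r dotNl => h1; exfalso; lra.
Qed.

Section Key.
Variables (a : V) (k : int).
Hypothesis Ha : a \in Phi.
Local Notation sg := (refl a k).
Local Notation h := (F (a, k)).

Lemma Fsig p v : F p (sg v) = F p v - (2 / dot a a * dot a p.1) * h v.
Proof. rewrite /F dot_refl /=; ring. Qed.

Lemma hsig v : h (sg v) = - h v.
Proof.
have nA := Phi_nz CRS Ha.
rewrite Fsig /F /=; field; exact: nA.
Qed.

Definition gam (b : V) : int := Num.floor (2 * dot b a / dot a a).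

Lemma gamE b : b \in Phi -> (gam b)%:~R = 2 * dot b a / dot a a.
Proof. by move=> hb; rewrite /gam; have [z ->] := Phi_int CRS Ha hb; rewrite intrKfloor. Qed.

Definition tau (p : V * int) : V * int :=
  let b' := refl a 0 p.1 in let m' := p.2 - gam p.1 * k in
  if 0 < dot b' rho then (b', m') else (- b', - m').

Lemma tauP p : p.1 \in Phi -> positive Phi rho (tau p).1 /\
  exists e : R, e * e = 1 /\ forall v, F (tau p) v = e * F p (sg v).
Proof.
move=> hb.
have hb' := refl_root CRS Ha hb.
have E v : F p (sg v) = dot v (refl a 0 p.1) - (p.2 - gam p.1 * k)%:~R.
  by rewrite /F (dot_refl_hyp _ _ _ (esym (gamE hb))).
rewrite /tau /=; case: ifP => hpos.
  split; first by split.
  by exists 1; split => [|v]; rewrite ?mul1r // E.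
split.
  split; first exact: Phi_opp.
  rewrite dotNl oppr_gt0; have := REG hb'; rewrite neq_lt hpos orbF //.
exists (-1); split => [|v]; first by rewrite mulrNN mul1r.
by rewrite E /F /= dotNr intrN; ring.
Qed.

Lemma len_refl_gt f : inW Phi f -> 0 < h x0 * h (f x0) ->
  (len Phi rho f < len Phi rho (sg \o f))%N.
Proof.
move=> hf hpos.
have hf' : inW Phi (sg \o f) by apply: inW_refl.
rewrite (lenE hf) (lenE hf') /=.
set y := f x0.
have nA := Phi_nz CRS Ha.
have sK := reflK k nA.
pose M := if 0 < dot a rho then (a, k) else (- a, - k).
have MP : positive Phi rho M.1 /\ exists e : R, e * e = 1 /\ forall v, F M v = e * h v.
  rewrite /M; case: ifP => hp.
    by split; [split | exists 1; split => [|v]; rewrite ?mul1r].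
  split.
    split; first exact: Phi_opp.
    rewrite dotNl oppr_gt0; have := REG Ha; rewrite neq_lt hp orbF //.
  exists (-1); split => [|v]; first by rewrite mulrNN mul1r.
  by rewrite /F /= dotNr intrN; ring.
have [MP1 [eM [eMe EM]]] := MP.
have MnA : ~ T y M.
  move=> /TE [_]; rewrite !EM; nra.
pose phi p := if p \in T (sg y) then p else tau p.
apply: (@card_inj_lt _ _ _ phi M); [exact: finiteT | exact: finiteT | | | |].
- move=> p /TE [hp hs]; rewrite /phi; case: ifPn => [hin|hn]; first by move: hin; rewrite in_setE.
  have hn' : ~ (F p x0 * F p (sg y) < 0).
    by move=> hc; move/negP: hn; apply; apply: mem_set; split.
  have hb : p.1 \in Phi by case: hp.
  have [tp [e [ee Et]]] := tauP hb.
  split => //; change (F (tau p) x0 * F (tau p) (sg y) < 0); rewrite !Et sK.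
  have := W_sign CRS REG p.2 (inW_refl k (@inW_id _ _ Phi) Ha) X0 X0 hb.
  rewrite /= -/(F p (sg x0)) => nz.
  have E0 := Fsig p x0; have Ey := Fsig p y.
  set g := 2 / dot a a * dot a p.1 in E0 Ey.
  set G0 := F p (sg x0) in E0 nz *; set Gy := F p (sg y) in Ey hn' *.
  set F0 := F p x0 in E0 hs hn' *; set Fy := F p y in Ey hs *.
  have hn2 : 0 <= F0 * Gy by rewrite leNgt; apply/negP.
  suff : G0 * Fy < 0 by move=> h1; nra.
  rewrite ltNge; apply/negP => h1.
  have h2 : G0 * Gy <= 0.
    have : (G0 * Gy) * (F0 * Fy) = (G0 * Fy) * (F0 * Gy) by ring.
    have : 0 <= (G0 * Fy) * (F0 * Gy) by apply: mulr_ge0.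
    nra.
  have : (F0 - G0) * (Fy - Gy) = g * g * (h x0 * h y) by rewrite E0 Ey; ring.
  nra.
- move=> p q hpA hqA.
  have C2 : forall p q, T y p -> T y q -> p \in T (sg y) -> q \notin T (sg y) ->
      p <> tau q.
    move=> p' q' /TE [hp hs] /TE [hq hs'] hpB hqB Ep.
    have hb : q'.1 \in Phi by case: hq.
    have [_ [e [ee Et]]] := tauP hb; rewrite -Ep in Et.
    move: hpB; rewrite in_setE => /TE [_ hpB].
    have hqB' : 0 <= F q' x0 * F q' (sg y).
      rewrite leNgt; apply/negP => hc; move/negP: hqB; apply; apply: mem_set; split => //.
    rewrite !Et sK in hpB; rewrite !Et in hs.
    have e1 : forall u w : R, e * u * (e * w) = u * w.
      by move=> u w; rewrite mulrACA ee mul1r.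
    rewrite e1 in hpB; rewrite e1 in hs.
    have : (F q' x0 * F q' y) * (F q' (sg x0) * F q' (sg y)) =
           (F q' x0 * F q' (sg y)) * (F q' (sg x0) * F q' y) by ring.
    nra.
  rewrite /phi; case: ifPn => [hpB|hpB]; case: ifPn => [hqB|hqB] //.
  + by move=> E; exfalso; exact: C2 hpA hqA hpB hqB E.
  + by move=> E; exfalso; exact: C2 hqA hpA hqB hpB (esym E).
  + move=> E.
    have hbp : p.1 \in Phi by case: hpA => [[]].
    have hbq : q.1 \in Phi by case: hqA => [[]].
    have [tp [ep [epe Ep]]] := tauP hbp; have [tq [eq [eqe Eq]]] := tauP hbq.
    apply: (@hyp_inj _ _ (ep * eq)).
    * by case: hpA.
    * by case: hqA.
    * by rewrite mulrACA epe eqe mulr1.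
    move=> u; have := Ep (sg u); rewrite E Eq !sK => H1.
    have : F p u = ep * (ep * F p u) by rewrite mulrA epe mul1r.
    by rewrite -H1; move=> ->; ring.
- split => //; change (F M x0 * F M (sg y) < 0); rewrite !EM hsig; nra.
- move=> p hpA; rewrite /phi; case: ifPn => [hin|hn] Ep.
    by apply: MnA; rewrite -Ep.
  have hbp : p.1 \in Phi by case: hpA => [[]].
  have [tp [e [ee Et]]] := tauP hbp.
  apply: MnA; suff <- : p = M by [].
  apply: (@hyp_inj _ _ (- e)); first by case: hpA.
  * exact: MP1.
  * by rewrite mulrNN.
  move=> u; have := Et (sg u); rewrite Ep EM sK hsig => H1.
  have : F p u = e * (e * F p u) by rewrite mulrA ee mul1r.
  rewrite -H1 EM => ->.
  have : eM * (eM * h u) = h u by rewrite mulrA eMe mul1r.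
  nra.
Qed.

End Key.

End Main.


Section Wall.
Variables (R : realType) (n : nat) (Phi : seq (vec R n)) (rho : vec R n).
Local Notation V := (vec R n).
Hypothesis CRS : crystallographic_root_system Phi.
Hypothesis REG : regular Phi rho.

Lemma near_int (t : R) (k0 m : int) : `|t| < 1 -> m <> k0 ->
  0 < (k0%:~R + t - m%:~R) * (k0%:~R - t - m%:~R).
Proof.
move=> ht hm.
have [h|h] : (m <= k0 - 1)%R \/ (k0 + 1 <= m)%R by lia.
  have : m%:~R <= k0%:~R - 1 :> R by rewrite -(intrB _ k0 1) ler_int.
  move: ht; rewrite ltr_norml => /andP [t1 t2] hm'; nra.
have : k0%:~R + 1 <= m%:~R :> R by rewrite -(intrD _ k0 1) ler_int.
move: ht; rewrite ltr_norml => /andP [t1 t2] hm'; nra.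
Qed.

Lemma wall_point b0 (k0 : int) : wall Phi rho b0 k0 -> exists x0,
  fund_alcove Phi rho x0 /\ forall beta (m : int), beta \in Phi ->
  0 < (dot x0 beta - m%:~R) * (dot (refl b0 k0 x0) beta - m%:~R) \/
  (beta = b0 /\ m = k0) \/ (beta = - b0 /\ m = - k0).
Proof.
move=> [[hb0 pb0] hk0 [xw [Hw1 Hw2]]].
have nb := Phi_nz CRS hb0.
have bb : 0 < dot b0 b0 by rewrite lt_def nb dot_ge0.
set c0 : R := 1 - 2 * k0%:~R.
have Hc0 : c0 * c0 = 1.
  move: (hk0) => [hk|hk]; rewrite /c0 hk ?rmorph0 ?rmorph1; lra.
set d := c0 *: b0.
pose G g := Num.min (dot xw g) (1 - dot xw g) / (1 + `|dot d g|).
have Gp : forall g, g \in Phi -> positive Phi rho g /\ g != b0 -> 0 < G g.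
  move=> g _ [pg ng]; have := Hw2 g pg ng => /andP [h1 h2].
  apply: divr_gt0; first by rewrite lt_min h1 subr_gt0 h2.
  by rewrite ltr_pwDl.
have [e e0 He] := seq_lb Gp.
set e' := Num.min e (1 / (1 + dot b0 b0)).
have bb1 : 0 < 1 + dot b0 b0 by apply: addr_gt0.
have e'0 : 0 < e'.
  by rewrite lt_min e0 /=; apply: divr_gt0.
have e'b : e' * dot b0 b0 < 1.
  have : e' <= 1 / (1 + dot b0 b0) by rewrite ge_min lexx orbT.
  rewrite ler_pdivlMr // => h; nra.
have e'g : forall g, positive Phi rho g -> g != b0 ->
    0 < dot xw g + e' * dot d g < 1 /\ 0 < dot xw g - e' * dot d g < 1.
  move=> g pg ng; have hg : g \in Phi by case: pg.
  have := He g hg (conj pg ng); have := Hw2 g pg ng => /andP [h1 h2].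
  have : e' <= e by rewrite ge_min lexx.
  have hp : 0 < 1 + `|dot d g| by have := normr_ge0 (dot d g); lra.
  rewrite /G ler_pdivlMr // => h3 h4.
  set mm := Num.min (dot xw g) (1 - dot xw g) in h3.
  have m1 : mm <= dot xw g by rewrite ge_min lexx.
  have m2 : mm <= 1 - dot xw g by rewrite ge_min lexx orbT.
  have := ler_norm (dot d g); have := ler_norm (- dot d g); rewrite normrN.
  move=> h5 h6.
  have k1 : e' * (1 + `|dot d g|) <= mm.
    apply: le_trans h4; apply: ler_wpM2r => //; exact: ltW.
  have k2 : e' * dot d g <= e' * `|dot d g| by apply: ler_wpM2l => //; exact: ltW.
  have k3 : - (e' * dot d g) <= e' * `|dot d g|.
    by rewrite -mulrN; apply: ler_wpM2l => //; exact: ltW.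
  split; apply/andP; split; lra.
set x0 := xw + e' *: d.
have dx0 : forall g, dot x0 g = dot xw g + e' * dot d g by move=> g; rewrite dotDl dotZl.
have sx0 : refl b0 k0 x0 = xw - e' *: d.
  rewrite /refl dx0 Hw1 /d dotZl !scalerA.
  have -> : (k0%:~R + e' * (c0 * dot b0 b0) - k0%:~R) * 2 / dot b0 b0 = 2 * (e' * c0).
    by field.
  have -> : (2 * (e' * c0)) *: b0 = (e' * c0) *: b0 + (e' * c0) *: b0.
    by rewrite -scalerDl; congr (_ *: _); ring.
  by rewrite /x0 /d scalerA opprD addrA addrK.
have dsx0 : forall g, dot (refl b0 k0 x0) g = dot xw g - e' * dot d g.
  by move=> g; rewrite sx0 dotBl dotZl.
have db0 : dot d b0 = c0 * dot b0 b0 by rewrite /d dotZl.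
have tb : `|e' * (c0 * dot b0 b0)| < 1.
  rewrite normrM normrM (gtr0_norm e'0) (gtr0_norm bb).
  have -> : `|c0| = 1.
    by move: (hk0) => [hk|hk]; rewrite /c0 hk ?rmorph0 ?rmorph1 ?mulr0 ?mulr1 ?subr0;
       rewrite ?normr1 //; rewrite (_ : 1 - 2 = -1 :> R); [rewrite normrN normr1|lra].
  by rewrite mul1r.
exists x0; split.
  move=> g pg; have [->|ng] := eqVneq g b0.
    rewrite dx0 Hw1 db0; move: (hk0) => [hk|hk]; move: tb;
      rewrite /c0 hk ?rmorph0 ?rmorph1 ?mulr0 ?subr0 ?mul1r => tb.
      have : 0 < e' * dot b0 b0 by apply: mulr_gt0.
      move=> h; apply/andP; split; lra.
    have : 0 < e' * dot b0 b0 by apply: mulr_gt0.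
    move=> h; apply/andP; split; nra.
  by have [] := e'g g pg ng; rewrite dx0.
have Hpos : forall beta (m : int), positive Phi rho beta ->
  0 < (dot x0 beta - m%:~R) * (dot (refl b0 k0 x0) beta - m%:~R) \/
  (beta = b0 /\ m = k0) \/ (beta = - b0 /\ m = - k0).
  move=> beta m pb; have [->|nb0] := eqVneq beta b0.
    have [->|mk] := eqVneq m k0; first by right; left.
    left; rewrite dx0 dsx0 Hw1 db0.
    apply: near_int => //; exact/eqP.
  left; have [h1 h2] := e'g beta pb nb0.
  by rewrite dx0 dsx0; apply: unit_sign.
move=> beta m hb; case: (pos_or_neg CRS REG hb) => pb; first exact: Hpos.
case: (Hpos (- beta) (- m) pb) => [h|[[h1 h2]|[h1 h2]]].
- left; move: h; rewrite !dotNr intrN -!opprD mulrNN //.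
- right; right; split; first by rewrite -h1 opprK.
  by rewrite -h2 opprK.
- right; left; split; first by rewrite -(opprK beta) h1 opprK.
  by rewrite -(opprK m) h2 opprK.
Qed.


End Wall.

Unset Implicit Arguments.

Theorem corollary4p6 (R : realType) (n : nat) (Phi : seq (vec R n)) (rho : vec R n)
  (w s : vec R n -> vec R n) (r : nat -> vec R n -> vec R n)
  (alpha : vec R n) (c : int) (N : nat) :
  crystallographic_root_system Phi ->
  regular Phi rho ->
  inW Phi w ->
  simple_refl Phi rho s ->
  right_descent Phi rho w s ->
  alpha \in Phi ->
  (forall t : nat, (1 <= t <= N)%N -> r t = refl alpha (c + t%:Z)) ->
  (forall t : nat, (1 <= t <= N)%N ->
     len Phi rho (rprod r t \o w \o s) = (len Phi rho (rprod r t.-1 \o w \o s)).+1 /\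
     rprod r t \o w \o s <> rprod r t.-1 \o w) ->
  ~ right_descent Phi rho (rprod r N \o w \o s) s.
Proof.
move=> CRS REG hw [b0 [k0 [Hwall ->]]] hdesc ha hr hlen.
have hb0 : b0 \in Phi by case: Hwall => [[]].
have [x0 [X0 NEAR]] := wall_point CRS REG Hwall.
have nb0 := Phi_nz CRS hb0.
have sK := reflK k0 nb0.
have hs : inW Phi (refl b0 k0) := inW_refl k0 (inW_id Phi) hb0.
have hE : forall t, (t <= N)%N -> inW Phi (rprod r t \o w).
  elim=> [|t IH] ht; first exact: hw.
  rewrite /= hr; last by rewrite ht.
  by apply: inW_refl => //; apply: IH; apply: ltnW.
have EsK : forall f : vec R n -> vec R n, f \o refl b0 k0 \o refl b0 k0 = f.
  by move=> f; apply/funext => v /=; rewrite sK.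
have inv : forall t, (t <= N)%N ->
    (len Phi rho (rprod r t \o w \o refl b0 k0) < len Phi rho (rprod r t \o w))%N.
  elim=> [|t IH] ht; first exact: hdesc.
  have ht1 : (1 <= t.+1 <= N)%N by rewrite ht.
  have [Hl Hne] := hlen t.+1 ht1.
  have IH' := IH (ltnW ht).
  have hEt := hE t (ltnW ht).
  have hDt : inW Phi (rprod r t \o w \o refl b0 k0) by apply: inW_comp.
  set sg := refl alpha (c + t.+1%:Z).
  have ED : rprod r t.+1 \o w \o refl b0 k0 = sg \o (rprod r t \o w \o refl b0 k0).
    by rewrite /= hr.
  have EE : rprod r t.+1 \o w = sg \o (rprod r t \o w) by rewrite /= hr.
  rewrite ED in Hl Hne *; rewrite EE in Hne *.
  set D := rprod r t \o w \o refl b0 k0 in hDt Hl Hne IH' *.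
  set E := rprod r t \o w in hEt Hne IH' *.
  simpl in Hl.
  pose h := F (alpha, c + t.+1%:Z).
  have nA := Phi_nz CRS ha.
  have sgK := reflK (c + t.+1%:Z) nA.
  have hnz : forall f x, inW Phi f -> fund_alcove Phi rho x -> h (f x) != 0.
    move=> f x hf hx; have := W_sign CRS REG (c + t.+1%:Z) hf hx hx ha.
    by rewrite /h /F /=; apply: contraTneq => ->; rewrite mulr0 ltxx.
  have h0 : h x0 != 0 := hnz id x0 (inW_id Phi) X0.
  have hD : h (D x0) != 0 := hnz D x0 hDt X0.
  have hE0 : h (E x0) != 0 := hnz E x0 hEt X0.
  have s1 : 0 < h x0 * h (D x0).
    rewrite lt_def mulf_neq0 //= leNgt; apply/negP => neg.
    have hg : inW Phi (sg \o D) by apply: inW_refl.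
    have := @len_refl_gt _ _ _ _ CRS REG _ X0 alpha (c + t.+1%:Z) ha _ hg.
    rewrite /= (hsig CRS (c + t.+1%:Z) ha); move=> /(_ ltac:(rewrite mulrN oppr_gt0; exact: neg)).
    have -> : sg \o (sg \o D) = D by apply/funext => v /=; rewrite /sg sgK.
    by rewrite Hl ltnNge leqnSn.
  have EDs : E x0 = D (refl b0 k0 x0) by rewrite /D /= sK.
  have s2 : 0 < h (D x0) * h (E x0).
    have [b' [m' [hb' Eh]]] := W_hyp CRS hDt (c + t.+1%:Z) ha.
    rewrite EDs /h /F /= !Eh.
    case: (NEAR b' m' hb') => [//|[[eb em]|[eb em]]]; exfalso; apply: Hne.
    - apply/funext => v /=.
      rewrite [RHS](_ : E v = D (refl b0 k0 v)); last by rewrite /D /= sK.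
      apply: (conj_refl CRS hDt ha hb0 (e := 1)); first by rewrite mulr1.
      by move=> u; rewrite Eh eb em mul1r.
    - apply/funext => v /=.
      rewrite [RHS](_ : E v = D (refl b0 k0 v)); last by rewrite /D /= sK.
      apply: (conj_refl CRS hDt ha hb0 (e := -1)); first by rewrite mulrNN mulr1.
      by move=> u; rewrite Eh eb em dotNr intrN; ring.
  have s3 : 0 < h x0 * h (E x0).
    have hAB : 0 < (h x0 * h (D x0)) * (h (D x0) * h (E x0)) by apply: mulr_gt0.
    have hDD : 0 < h (D x0) * h (D x0) by rewrite lt_def mulf_neq0 //= -expr2 sqr_ge0.
    rewrite -(pmulr_lgt0 _ hDD).
    have -> : h x0 * h (E x0) * (h (D x0) * h (D x0)) =
      (h x0 * h (D x0)) * (h (D x0) * h (E x0)) by ring.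
    exact: hAB.
  have := @len_refl_gt _ _ _ _ CRS REG _ X0 alpha (c + t.+1%:Z) ha _ hEt s3.
  rewrite -/sg Hl; move: IH'; lia.
move=> Hc; have := inv N (leqnn N).
move: Hc; rewrite /right_descent EsK; lia.
Qed.
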